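(* $\mathsf{FindHS}_{\boldsymbol{\Sigma}^0_1} \times \mathsf{FindHS}_{\boldsymbol{\Sigma}^0_1} \le_{\mathrm{sW}} \mathsf{FindHS}_{\boldsymbol{\Sigma}^0_1}$.
   Context: Strong Weihrauch reducibility: $f\le_{\mathrm{sW}} g$ iff there are computable $\Phi,\Psi$ on Baire space with $\Psi\circ G\circ\Phi$ realizing $f$ for every realizer $G$ of $g$. $f\times g$ is the parallel product $(x,z)\mapsto f(x)\times g(z)$. The Ramsey space $[\mathbb{N}]^\mathbb{N}$ is the set of strictly increasing functions $\mathbb{N}\to\mathbb{N}$ with Baire-space topology; $fg=f\circ g$. For $P\subseteq[\mathbb{N}]^\mathbb{N}$, $f$ is homogeneous for $P$ if either $fg\in P$ for all $g\in[\mathbb{N}]^\mathbb{N}$ or $fg\notin P$ for all $g$; $\mathrm{HS}(P)$ is the set of homogeneous solutions. Open sets of $[\mathbb{N}]^\mathbb{N}$ are named by enumerations of sets of finite strictly increasing strings whose cones have union the set. $\mathsf{FindHS}_{\boldsymbol{\Sigma}^0_1}$: input an open $P$ with $\mathrm{HS}(P)\cap P\ne\emptyset$, output any element of $\mathrm{HS}(P)\cap P$. *)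

(* Defs.v *)
From mathcomp Require Import all_boot.
Set Implicit Arguments. Unset Strict Implicit. Unset Printing Implicit Defensive.

Inductive prf : Type :=
| PZero : prf
| PSucc : prf
| PProj : nat -> prf
| PComp : prf -> list prf -> prf
| PRec  : prf -> prf -> prf
| PMin  : prf -> prf.

Inductive peval : prf -> seq nat -> nat -> Prop :=
| ev_zero v : peval PZero v 0
| ev_succ v : peval PSucc v (head 0 v).+1
| ev_proj i v : peval (PProj i) v (nth 0 v i)
| ev_comp f gs v ws y :
    pevals gs v ws -> peval f ws y -> peval (PComp f gs) v y
| ev_rec0 f g v y : peval f v y -> peval (PRec f g) (0 :: v) y
| ev_recS f g n v y z :
    peval (PRec f g) (n :: v) y -> peval g (n :: y :: v) z ->
    peval (PRec f g) (n.+1 :: v) z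
| ev_min f v n :
    peval f (n :: v) 0 ->
    (forall m, m < n -> exists k, peval f (m :: v) k.+1) ->
    peval (PMin f) v n
with pevals : list prf -> seq nat -> seq nat -> Prop :=
| evs_nil v : pevals nil v [::]
| evs_cons g gs v y ys :
    peval g v y -> pevals gs v ys -> pevals (g :: gs) v (y :: ys).

Definition computable_nat (h : nat -> nat) : Prop :=
  exists c, forall x, peval c [:: x] (h x).

Definition computable_seq (h : seq nat -> seq nat) : Prop :=
  computable_nat (fun x => CodeSeq.code (h (CodeSeq.decode x))).

Definition baire := nat -> nat.

Definition prefix (p : baire) (n : nat) : seq nat := mkseq p n.

(* The functional given by the (computable) approximation h on finite
   prefixes maps input p to output q: every output digit is eventually
   produced, and every produced digit is correct. *)
Definition fcomputes (h : seq nat -> seq nat) (p q : baire) : Prop :=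
  (forall i, exists n, i < size (h (prefix p n))) /\
  (forall n i, i < size (h (prefix p n)) -> nth 0 (h (prefix p n)) i = q i).

Definition incr (f : baire) : Prop := forall n, f n < f n.+1.

Definition homogeneous (P : baire -> Prop) (f : baire) : Prop :=
  incr f /\
  ((forall g, incr g -> P (f \o g)) \/ (forall g, incr g -> ~ P (f \o g))).

(* Names of open sets: p n = 0 means "nothing", p n = k.+1 enumerates the
   finite string CodeSeq.decode k, which must be strictly increasing. *)
Definition open_name (p : baire) : Prop :=
  forall n, 0 < p n -> sorted ltn (CodeSeq.decode (p n).-1).

Definition is_prefix_of (s : seq nat) (f : baire) : Prop :=
  forall i, i < size s -> nth 0 s i = f i.

Definition open_of (p : baire) (f : baire) : Prop :=
  incr f /\ exists n, 0 < p n /\ is_prefix_of (CodeSeq.decode (p n).-1) f.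

(* FindHS_{Sigma^0_1} on names: domain and solutions (elements of
   [N]^N are named by themselves). *)
Definition FindHS_dom (p : baire) : Prop :=
  open_name p /\ exists f, homogeneous (open_of p) f /\ open_of p f.

Definition FindHS_sol (p r : baire) : Prop :=
  homogeneous (open_of p) r /\ open_of p r.

Definition pleft (p : baire) : baire := fun n => p n.*2.
Definition pright (p : baire) : baire := fun n => p n.*2.+1.

Definition FindHS2_dom (p : baire) : Prop :=
  FindHS_dom (pleft p) /\ FindHS_dom (pright p).

Definition FindHS2_sol (p r : baire) : Prop :=
  FindHS_sol (pleft p) (pleft r) /\ FindHS_sol (pright p) (pright r).

Definition realizer (dom : baire -> Prop) (sol : baire -> baire -> Prop)
  (G : baire -> baire) : Prop :=
  forall p, dom p -> sol p (G p).

Definition sW_le (fdom : baire -> Prop) (fsol : baire -> baire -> Prop)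
  (gdom : baire -> Prop) (gsol : baire -> baire -> Prop) : Prop :=
  exists hPhi hPsi : seq nat -> seq nat,
    computable_seq hPhi /\ computable_seq hPsi /\
    forall G, realizer gdom gsol G ->
      forall p, fdom p ->
        exists q, fcomputes hPhi p q /\
          exists r, fcomputes hPsi (G q) r /\ fsol p r.

(* Main.v *)
Require Import Defs.
From mathcomp Require Import all_boot.
From mathcomp Require Import zify.
From Stdlib Require Import Lia FunctionalExtensionality.
Set Implicit Arguments. Unset Strict Implicit. Unset Printing Implicit Defensive.

Definition PR n (f : seq nat -> nat) :=
  exists c, forall v, size v = n -> peval c v (f v).

Fixpoint PRs n (fs : seq (seq nat -> nat)) : Prop :=
  match fs with [::] => True | f :: fs' => PR n f /\ PRs n fs' end.

Lemma PRs_progs n fs : PRs n fs ->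
  exists cs, forall v, size v = n -> pevals cs v (map (fun f => f v) fs).
Proof.
elim: fs => [|f fs IH] /=; first by exists nil => v _; constructor.
case=> [[c Hc] /IH [cs Hcs]]; exists (c :: cs) => v Hv; constructor; auto.
Qed.

Lemma PR_comp m n f fs : PR m f -> size fs = m -> PRs n fs ->
  PR n (fun v => f (map (fun g => g v) fs)).
Proof.
case=> c Hc Hs /PRs_progs [cs Hcs]; exists (PComp c cs) => v Hv.
econstructor; first exact: Hcs.
by apply: Hc; rewrite size_map.
Qed.

Lemma PR_ext n f g : PR n f -> (forall v, size v = n -> f v = g v) -> PR n g.
Proof. by case=> c Hc E; exists c => v Hv; rewrite -E //; apply: Hc. Qed.

Lemma PR_proj n i : PR n (fun v => nth 0 v i).
Proof. by exists (PProj i) => v _; constructor. Qed.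

Lemma PR_zero n : PR n (fun _ => 0).
Proof.
exists (PComp PZero [::]) => v _; econstructor; first by constructor.
constructor.
Qed.

Lemma PR_succ n g : PR n g -> PR n (fun v => (g v).+1).
Proof.
move=> Hg.
have H1 : PR 1 (fun v => (head 0 v).+1) by exists PSucc => v _; constructor.
have := PR_comp H1 (fs := [:: g]) erefl.
by apply; split.
Qed.

Lemma PR_const n k : PR n (fun _ => k).
Proof. elim: k => [|k IH]; [exact: PR_zero | exact: PR_succ]. Qed.

Fixpoint prec (b : nat) (s : nat -> nat -> nat) (k : nat) : nat :=
  match k with 0 => b | k'.+1 => s k' (prec b s k') end.

Lemma PR_rec n f g : PR n f -> PR n.+2 g ->
  PR n.+1 (fun v => prec (f (behead v)) (fun k y => g [:: k, y & behead v]) (head 0 v)).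
Proof.
case=> cf Hf [cg Hg]; exists (PRec cf cg) => [[|k w]] //= [Hw].
elim: k => [|k IH] /=; first by constructor; apply: Hf.
by econstructor; first exact: IH; apply: Hg => /=; rewrite Hw.
Qed.

Definition PR1 (f : nat -> nat) := PR 1 (fun v => f (nth 0 v 0)).
Definition PR2 (f : nat -> nat -> nat) := PR 2 (fun v => f (nth 0 v 0) (nth 0 v 1)).
Definition PR3 (f : nat -> nat -> nat -> nat) :=
  PR 3 (fun v => f (nth 0 v 0) (nth 0 v 1) (nth 0 v 2)).

Lemma app1 n f g : PR1 f -> PR n g -> PR n (fun v => f (g v)).
Proof.
move=> Hf Hg; have := PR_comp Hf (fs := [:: g]) erefl.
by apply; split.
Qed.

Lemma app2 n f g1 g2 : PR2 f -> PR n g1 -> PR n g2 -> PR n (fun v => f (g1 v) (g2 v)).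
Proof.
move=> Hf H1 H2; have := PR_comp Hf (fs := [:: g1; g2]) erefl.
by apply; do !split.
Qed.

Lemma app3 n f g1 g2 g3 : PR3 f -> PR n g1 -> PR n g2 -> PR n g3 ->
  PR n (fun v => f (g1 v) (g2 v) (g3 v)).
Proof.
move=> Hf H1 H2 H3; have := PR_comp Hf (fs := [:: g1; g2; g3]) erefl.
by apply; do !split.
Qed.

Create HintDb prdb.

Definition PR4 (f : nat -> nat -> nat -> nat -> nat) :=
  PR 4 (fun v => f (nth 0 v 0) (nth 0 v 1) (nth 0 v 2) (nth 0 v 3)).

Ltac prs_hook := fail.

Ltac prs :=
  match goal with
  | |- PR1 (fun _ => _) => rewrite /PR1; cbv beta; prs
  | |- PR2 (fun _ _ => _) => rewrite /PR2; cbv beta; prs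
  | |- PR3 (fun _ _ _ => _) => rewrite /PR3; cbv beta; prs
  | |- PR4 (fun _ _ _ _ => _) => rewrite /PR4; cbv beta; prs
  | |- PR _ (fun v => nth 0 v _) => apply: PR_proj
  | |- PR _ (fun _ => ?k) => apply: PR_const
  | |- PR _ (fun v => S (@?a v)) => apply: PR_succ; prs
  | |- PR _ (fun v => ?f (@?a v) (@?b v) (@?c v)) =>
      apply: (@app3 _ f); [solve [eauto with prdb | prs | prs_hook] | prs | prs | prs]
  | |- PR _ (fun v => ?f (@?a v) (@?b v)) =>
      apply: (@app2 _ f); [solve [eauto with prdb | prs | prs_hook] | prs | prs]
  | |- PR _ (fun v => ?f (@?a v)) =>
      apply: (@app1 _ f); [solve [eauto with prdb | prs | prs_hook] | prs]
  end.

Lemma rec1 b s : PR1 b -> PR3 s ->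
  PR2 (fun k x => prec (b x) (fun k y => s k y x) k).
Proof.
move=> Hb Hs.
have := PR_rec (n := 1) (f := fun w => b (nth 0 w 0))
   (g := fun w => s (nth 0 w 0) (nth 0 w 1) (nth 0 w 2)) Hb Hs.
move/PR_ext; apply => -[|k [|x w]] //=.
Qed.

Lemma rec2 b s : PR2 b -> PR4 s ->
  PR3 (fun k x z => prec (b x z) (fun k y => s k y x z) k).
Proof.
move=> Hb Hs.
have := PR_rec (n := 2) (f := fun w => b (nth 0 w 0) (nth 0 w 1))
   (g := fun w => s (nth 0 w 0) (nth 0 w 1) (nth 0 w 2) (nth 0 w 3)) Hb Hs.
move/PR_ext; apply => -[|k [|x [|z w]]] //=.
Qed.

Definition ifnz (c a b : nat) : nat := if c is 0 then b else a.

Lemma PR_ifnz : PR3 ifnz.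
Proof.
have := PR_rec (n := 2) (f := fun w => nth 0 w 1) (g := fun w => nth 0 w 2)
  (PR_proj _ _) (PR_proj _ _).
move/PR_ext; apply => -[|[|c] [|a [|b w]]] //=.
Qed.

Lemma PR_add : PR2 addn.
Proof.
have := rec1 (b := id) (s := fun _ y _ => y.+1) _ _.
move/(_ (PR_proj _ _)); case; first by rewrite /PR3; prs.
move=> c Hc; exists c => v Hv; suff -> : nth 0 v 0 + nth 0 v 1 =
   prec (nth 0 v 1) (fun _ y => y.+1) (nth 0 v 0) by apply: Hc.
by elim: (nth 0 v 0) => //= k <-.
Qed.
Hint Resolve PR_ifnz PR_add : prdb.

Lemma PR_mul : PR2 muln.
Proof.
have := rec1 (b := fun _ => 0) (s := fun _ y x => y + x) _ _.
case; [by rewrite /PR1; prs | by rewrite /PR3; prs |].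
move=> c Hc; exists c => v Hv; suff -> : nth 0 v 0 * nth 0 v 1 =
   prec 0 (fun _ y => y + nth 0 v 1) (nth 0 v 0) by apply: Hc.
by elim: (nth 0 v 0) => //= k <-; rewrite mulSn addnC.
Qed.
Hint Resolve PR_mul : prdb.

Lemma PR_pred : PR1 predn.
Proof.
have := PR_rec (n := 0) (f := fun _ => 0) (g := fun w => nth 0 w 0) (PR_zero _) (PR_proj _ _).
by rewrite /PR1; move/PR_ext; apply => -[|[|k] w] //=.
Qed.
Hint Resolve PR_pred : prdb.

Lemma PR_sub : PR2 subn.
Proof.
have := rec1 (b := id) (s := fun _ y _ => y.-1) _ _.
case; [by rewrite /PR1; prs | by rewrite /PR3; prs |].
move=> c Hc.
have H2 : PR2 (fun k x => prec x (fun _ y => y.-1) k) by exists c.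
have : PR 2 (fun v => prec (nth 0 v 0) (fun _ y => y.-1) (nth 0 v 1)).
  by apply: (@app2 _ _ _ _ H2); prs.
rewrite ?/PR1 ?/PR2; move/PR_ext; apply => v _; elim: (nth 0 v 1) => [|k IH] /=; first by rewrite subn0.
by rewrite IH subnS.
Qed.
Hint Resolve PR_sub : prdb.

Lemma PR_exp : PR2 expn.
Proof.
have := rec1 (b := fun _ => 1) (s := fun _ y x => y * x) _ _.
case; [by rewrite /PR1; prs | by rewrite /PR3; prs |].
move=> c Hc.
have H2 : PR2 (fun k x => prec 1 (fun _ y => y * x) k) by exists c.
have : PR 2 (fun v => prec 1 (fun _ y => y * nth 0 v 0) (nth 0 v 1)).
  by apply: (@app2 _ _ _ _ H2); prs.
rewrite ?/PR1 ?/PR2; move/PR_ext; apply => v _; elim: (nth 0 v 1) => [|k IH] /=; first by rewrite expn0.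
by rewrite IH expnSr.
Qed.
Hint Resolve PR_exp : prdb.

Definition eqN (a b : nat) : nat := a == b.
Definition ltN (a b : nat) : nat := a < b.
Definition leN (a b : nat) : nat := a <= b.

Lemma PR_eqN : PR2 eqN.
Proof.
have : PR 2 (fun v => ifnz ((nth 0 v 0 - nth 0 v 1) + (nth 0 v 1 - nth 0 v 0)) 0 1) by prs.
rewrite ?/PR1 ?/PR2; move/PR_ext; apply => v _; rewrite /eqN; set a := nth 0 v 0; set b := nth 0 v 1.
case: (ltngtP a b) => H.
- by have := H; rewrite -subn_gt0; case: (b - a) => // k _; rewrite addnS.
- by have := H; rewrite -subn_gt0; case: (a - b).
- by rewrite H subnn.
Qed.

Lemma PR_ltN : PR2 ltN.
Proof.
have : PR 2 (fun v => ifnz (nth 0 v 1 - nth 0 v 0) 1 0) by prs.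
rewrite ?/PR1 ?/PR2; move/PR_ext; apply => v _; rewrite /ltN -subn_gt0; by case: (_ - _).
Qed.

Lemma PR_leN : PR2 leN.
Proof.
have : PR 2 (fun v => ifnz (nth 0 v 0 - nth 0 v 1) 0 1) by prs.
rewrite ?/PR1 ?/PR2; move/PR_ext; apply => v _; rewrite /leN -subn_eq0; by case: (_ - _).
Qed.
Hint Resolve PR_eqN PR_ltN PR_leN : prdb.

Lemma eqNE a b : (eqN a b != 0) = (a == b). Proof. by rewrite /eqN; case: (a == b). Qed.
Lemma ltNE a b : (ltN a b != 0) = (a < b). Proof. by rewrite /ltN; case: (a < b). Qed.
Lemma leNE a b : (leN a b != 0) = (a <= b). Proof. by rewrite /leN; case: (a <= b). Qed.

Definition rec1f (b : nat -> nat) (s : nat -> nat -> nat -> nat) k x :=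
  prec (b x) (fun k y => s k y x) k.
Definition rec2f (b : nat -> nat -> nat) (s : nat -> nat -> nat -> nat -> nat) k x z :=
  prec (b x z) (fun k y => s k y x z) k.

Lemma PR_rec1f b s : PR1 b -> PR3 s -> PR2 (rec1f b s).
Proof. exact: rec1. Qed.
Lemma PR_rec2f b s : PR2 b -> PR4 s -> PR3 (rec2f b s).
Proof. exact: rec2. Qed.
Hint Resolve PR_rec1f PR_rec2f : prdb.

Definition findlt B (P : nat -> nat) :=
  prec 0 (fun B y => ifnz (eqN y B) (ifnz (P B) B B.+1) y) B.

Lemma findltS B P : findlt B.+1 P =
  if findlt B P == B then (if P B is 0 then B.+1 else B) else findlt B P.
Proof. by rewrite {1}/findlt /= -/(findlt B P) /eqN; case: eqP. Qed.

Lemma findlt_spec B P :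
  [/\ findlt B P <= B, (forall j, j < findlt B P -> P j = 0) &
      (findlt B P < B -> P (findlt B P) != 0)].
Proof.
elim: B => [|B [IH1 IH2 IH3]]; first by split.
rewrite findltS; case: eqP => [E|NE].
  case HP: (P B) => [|m].
  - split => //; last by rewrite ltnn.
    by move=> j; rewrite ltnS leq_eqVlt => /orP[/eqP->//|]; rewrite -E; apply: IH2.
  - by split => //; [move=> j; rewrite -E; apply: IH2 | rewrite HP].
have lt : findlt B P < B by rewrite ltn_neqAle IH1 andbT; apply/eqP.
by split => //; [apply: leqW | move=> _; apply: IH3].
Qed.

Definition find1 (P : nat -> nat -> nat) B x := findlt B (fun k => P k x).
Definition find2 (P : nat -> nat -> nat -> nat) B x z := findlt B (fun k => P k x z).

Lemma PR_find1 P : PR2 P -> PR2 (find1 P).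
Proof.
move=> HP.
have H : PR2 (rec1f (fun _ => 0) (fun B y x => ifnz (eqN y B) (ifnz (P B x) B B.+1) y)).
  by apply: PR_rec1f; prs.
exact: H.
Qed.

Lemma PR_find2 P : PR3 P -> PR3 (find2 P).
Proof.
move=> HP.
have H : PR3 (rec2f (fun _ _ => 0) (fun B y x z => ifnz (eqN y B) (ifnz (P B x z) B B.+1) y)).
  by apply: PR_rec2f; prs.
exact: H.
Qed.
Hint Resolve PR_find1 PR_find2 : prdb.

Definition bexN B (P : nat -> nat) := ltN (findlt B P) B.
Definition ballN B (P : nat -> nat) := eqN (findlt B (fun k => eqN (P k) 0)) B.

Lemma bexNP B P : reflect (exists2 k, k < B & P k != 0) (bexN B P != 0).
Proof.
rewrite /bexN ltNE; case: (findlt_spec B P) => H1 H2 H3.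
apply: (iffP idP) => [lt|[k kB Pk]]; first by exists (findlt B P); last exact: H3.
rewrite ltn_neqAle H1 andbT; apply/eqP => E.
by move: Pk; rewrite H2 // E.
Qed.

Lemma ballNP B P : reflect (forall k, k < B -> P k != 0) (ballN B P != 0).
Proof.
rewrite /ballN eqNE; case: (findlt_spec B (fun k => eqN (P k) 0)) => H1 H2 H3.
apply: (iffP eqP) => [E k kB|H].
  by move: (H2 k); rewrite E => /(_ kB); rewrite /eqN; case: (P k).
apply/eqP; rewrite eqn_leq H1 /=; rewrite leqNgt; apply/negP => lt.
by move: (H3 lt); rewrite eqNE (negbTE (H _ lt)).
Qed.

Ltac prs_hook ::= first
  [ apply: PR_find1; prs | apply: PR_find2; prs
  | apply: PR_rec1f; prs | apply: PR_rec2f; prs ].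

Definition bex1 (P : nat -> nat -> nat) B x := bexN B (fun k => P k x).
Definition bex2 (P : nat -> nat -> nat -> nat) B x z := bexN B (fun k => P k x z).
Definition ball1 (P : nat -> nat -> nat) B x := ballN B (fun k => P k x).
Definition ball2 (P : nat -> nat -> nat -> nat) B x z := ballN B (fun k => P k x z).

Lemma PR_bex1 P : PR2 P -> PR2 (bex1 P).
Proof. move=> HP; have : PR2 (fun B x => ltN (find1 P B x) B) by prs. exact. Qed.
Lemma PR_bex2 P : PR3 P -> PR3 (bex2 P).
Proof. move=> HP; have : PR3 (fun B x z => ltN (find2 P B x z) B) by prs. exact. Qed.
Lemma PR_ball1 P : PR2 P -> PR2 (ball1 P).
Proof.
move=> HP; have : PR2 (fun B x => eqN (find1 (fun k x => eqN (P k x) 0) B x) B) by prs.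
exact.
Qed.
Lemma PR_ball2 P : PR3 P -> PR3 (ball2 P).
Proof.
move=> HP; have : PR3 (fun B x z => eqN (find2 (fun k x z => eqN (P k x z) 0) B x z) B) by prs.
exact.
Qed.
Hint Resolve PR_bex1 PR_bex2 PR_ball1 PR_ball2 : prdb.

Ltac prs_hook ::= first
  [ apply: PR_find1; prs | apply: PR_find2; prs
  | apply: PR_rec1f; prs | apply: PR_rec2f; prs
  | apply: PR_bex1; prs | apply: PR_bex2; prs
  | apply: PR_ball1; prs | apply: PR_ball2; prs ].

Lemma findlt_eq B P k : k < B -> P k != 0 -> (forall j, j < k -> P j = 0) ->
  findlt B P = k.
Proof.
move=> kB Pk H; case: (findlt_spec B P) => H1 H2 H3.
case: (ltngtP (findlt B P) k) => // c.
- by move: (H3 (ltn_trans c kB)); rewrite H.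
- by move: Pk; rewrite H2.
Qed.

Definition consN x m := 2 ^ x * (m + m + 1).
Lemma PR_consN : PR2 consN. Proof. by rewrite /consN; prs. Qed.
Hint Resolve PR_consN : prdb.

Lemma consN_code x s : consN x (CodeSeq.code s) = CodeSeq.code (x :: s).
Proof. by rewrite /consN /= addn1 addnn. Qed.

Lemma consN_inj x y w z : consN x w = consN y z -> x = y /\ w = z.
Proof.
rewrite /consN => E.
have L : forall a b, logn 2 (2 ^ a * (b + b + 1)) = a.
  move=> a b; rewrite lognM ?expn_gt0 ?addn1 // pfactorK // logn_coprime ?addn0 //.
  by rewrite coprime2n /= addnn odd_double.
have xy : x = y by rewrite -(L x w) -(L y z) E.
split => //; move: E; rewrite xy => /eqP; rewrite eqn_pmul2l ?expn_gt0 //.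
by rewrite !addn1 eqSS !addnn -!muln2 eqn_pmul2r // => /eqP.
Qed.

Lemma consN_gt x w : x < consN x w /\ w < consN x w.
Proof.
rewrite /consN; split.
  by apply: (leq_trans (ltn_expl x (erefl _ : 1 < 2))); rewrite leq_pmulr // addn1.
apply: (@leq_trans (w + w + 1)); first by rewrite addn1 ltnS leq_addl.
by rewrite leq_pmull ?expn_gt0.
Qed.

Definition eqt (w u m : nat) := eqN (2 ^ u * (w + w + 1)) m.
Definition hd_t u m := bex2 eqt m.+1 u m.
Definition hdN m := ifnz m (find1 hd_t m.+1 m) 0.
Definition eqt' (u w m : nat) := eqN (2 ^ u * (w + w + 1)) m.
Definition tl_t w m := bex2 eqt' m.+1 w m.
Definition tlN m := ifnz m (find1 tl_t m.+1 m) 0.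

Lemma PR_hdN : PR1 hdN.
Proof. have H1 : PR3 eqt by rewrite /eqt; prs. have H2 : PR2 hd_t by rewrite /hd_t; prs. by rewrite /hdN; prs. Qed.
Lemma PR_tlN : PR1 tlN.
Proof. have H1 : PR3 eqt' by rewrite /eqt'; prs. have H2 : PR2 tl_t by rewrite /tl_t; prs. by rewrite /tlN; prs. Qed.
Hint Resolve PR_hdN PR_tlN : prdb.

Lemma hd_tlN x w : hdN (consN x w) = x /\ tlN (consN x w) = w.
Proof.
have [gx gw] := consN_gt x w.
have pos : consN x w != 0 by rewrite -lt0n (leq_ltn_trans _ gx).
have ifnzT : forall c a b, c != 0 -> ifnz c a b = a by case.
rewrite /hdN /tlN !ifnzT // /find1.
split.
- apply: findlt_eq; [by rewrite ltnS ltnW | |].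
  + by apply/bexNP; exists w; [rewrite ltnS ltnW | rewrite /eqt eqNE].
  + move=> j jx; apply/eqP; rewrite eqn0Ngt lt0n; apply/bexNP => -[k _].
    by rewrite /eqt eqNE => /eqP/consN_inj [jx' _]; move: jx; rewrite jx' ltnn.
- apply: findlt_eq; [by rewrite ltnS ltnW | |].
  + by apply/bexNP; exists x; [rewrite ltnS ltnW | rewrite /eqt' eqNE].
  + move=> j jx; apply/eqP; rewrite eqn0Ngt lt0n; apply/bexNP => -[k _].
    by rewrite /eqt' eqNE => /eqP/consN_inj [_ jx']; move: jx; rewrite jx' ltnn.
Qed.

Lemma hdN_code s : hdN (CodeSeq.code s) = head 0 s.
Proof. by case: s => [|x s] //; rewrite -consN_code (proj1 (hd_tlN x _)). Qed.
Lemma tlN_code s : tlN (CodeSeq.code s) = CodeSeq.code (behead s).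
Proof. by case: s => [|x s] //; rewrite -consN_code (proj2 (hd_tlN x _)). Qed.

Definition itl := rec1f (fun x => x) (fun _ y _ => tlN y).
Lemma PR_itl : PR2 itl. Proof. by rewrite /itl; apply: PR_rec1f; prs. Qed.
Hint Resolve PR_itl : prdb.

Lemma itl_code k s : itl k (CodeSeq.code s) = CodeSeq.code (drop k s).
Proof.
rewrite /itl /rec1f; elim: k => [|k IH] /=; first by rewrite drop0.
by rewrite IH tlN_code -drop1 drop_drop.
Qed.

Definition nthN m i := hdN (itl i m).
Lemma PR_nthN : PR2 nthN. Proof. by rewrite /nthN; prs. Qed.
Hint Resolve PR_nthN : prdb.

Lemma nthN_code s i : nthN (CodeSeq.code s) i = nth 0 s i.
Proof.
rewrite /nthN itl_code hdN_code; elim: s i => [|x s IH] [|i] //=.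
Qed.

Definition sz_t k m := eqN (itl k m) 0.
Definition sizeN m := find1 sz_t m.+1 m.
Lemma PR_sizeN : PR1 sizeN.
Proof. have H : PR2 sz_t by rewrite /sz_t; prs. by rewrite /sizeN; prs. Qed.
Hint Resolve PR_sizeN : prdb.

Lemma size_le_code s : size s <= CodeSeq.code s.
Proof.
elim: s => [|x s IH] //; rewrite -consN_code.
exact: leq_ltn_trans IH (consN_gt x _).2.
Qed.

Lemma code_eq0 s : (CodeSeq.code s == 0) = (s == [::]).
Proof.
case: s => [|x s] //; rewrite -consN_code; apply/negbTE.
by rewrite -lt0n; exact: leq_ltn_trans (leq0n _) (consN_gt x _).1.
Qed.

Lemma sizeN_code s : sizeN (CodeSeq.code s) = size s.
Proof.
apply: findlt_eq; first by rewrite ltnS size_le_code.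
- by rewrite /sz_t eqNE itl_code code_eq0 -size_eq0 size_drop subnn.
- move=> j js; apply/eqP; rewrite eqn0Ngt lt0n.
  by rewrite /sz_t eqNE itl_code code_eq0 -size_eq0 size_drop subn_eq0 -ltnNge.
Qed.

Ltac prs' := first [solve [eauto with prdb] | prs].

Definition psi_s j y x :=
  consN (hdN (nthN x (sizeN x - j.+1))) (consN (tlN (nthN x (sizeN x - j.+1))) y).
Definition psiR := rec1f (fun _ => 0) psi_s.
Definition PsiA x := psiR (sizeN x) x.

Lemma PR_PsiA : PR1 PsiA.
Proof.
have H1 : PR3 psi_s by rewrite /psi_s; prs.
have H2 : PR2 psiR by rewrite /psiR; apply: PR_rec1f; prs'.
by rewrite /PsiA; prs.
Qed.

Definition pairs (s : seq nat) := flatten [seq [:: hdN e; tlN e] | e <- s].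

Lemma psiR_spec s j : j <= size s ->
  psiR j (CodeSeq.code s) = CodeSeq.code (pairs (drop (size s - j) s)).
Proof.
rewrite /psiR /rec1f.
elim: j => [|j IH] js.
  rewrite subn0 drop_size. reflexivity.
rewrite [prec _ _ _]/= IH; last exact: ltnW.
rewrite /psi_s sizeN_code nthN_code.
rewrite (@drop_nth _ 0 (size s - j.+1)); last first.
  clear IH; lia.
rewrite subnSK; last exact: js.
rewrite !consN_code.
reflexivity.
Qed.

Definition hPsi (s : seq nat) := CodeSeq.decode (PsiA (CodeSeq.code s)).

Lemma hPsiE s : hPsi s = pairs s.
Proof.
by rewrite /hPsi /PsiA sizeN_code psiR_spec // subnn drop0 CodeSeq.codeK.
Qed.

Lemma comp_of_PR1 (h : nat -> nat) : PR1 h -> computable_nat h.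
Proof. by case=> c Hc; exists c => x; apply: (Hc [:: x]). Qed.

Lemma hPsi_comp : computable_seq hPsi.
Proof.
have [c Hc] := comp_of_PR1 PR_PsiA.
by exists c => x; rewrite /hPsi !CodeSeq.decodeK.
Qed.

Definition srt_t k t := ltN (nthN t k) (nthN t k.+1).
Definition srtN t := ball1 srt_t (sizeN t).-1 t.
Definition pfxH_t k s t := eqN (nthN s k) (hdN (nthN t k)).
Definition pfxH s t := ball2 pfxH_t (sizeN s) s t.
Definition pfxT_t k s t := eqN (nthN s k) (tlN (nthN t k)).
Definition pfxT s t := ball2 pfxT_t (sizeN s) s t.

Lemma PR_srtN : PR1 srtN.
Proof. have H : PR2 srt_t by rewrite /srt_t; prs. by rewrite /srtN; prs. Qed.
Lemma PR_pfxH : PR2 pfxH.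
Proof. have H : PR3 pfxH_t by rewrite /pfxH_t; prs. by rewrite /pfxH; prs. Qed.
Lemma PR_pfxT : PR2 pfxT.
Proof. have H : PR3 pfxT_t by rewrite /pfxT_t; prs. by rewrite /pfxT; prs. Qed.
Hint Resolve PR_srtN PR_pfxH PR_pfxT : prdb.

Definition validT a b t :=
  srtN t * leN 2 (sizeN t) * ltN (hdN (nthN t 0)) (hdN (nthN t 1)) *
  ltN (tlN (nthN t 0)) (tlN (nthN t 1)) *
  leN (sizeN a.-1) (sizeN t) * pfxH a.-1 t * leN (sizeN b.-1) (sizeN t) * pfxT b.-1 t.
Definition validN a b n := ltN 0 a * ltN 0 b * validT a b (tlN (tlN n)).
Definition qv a b n := ifnz (validN a b n) (tlN (tlN n)).+1 0.
Definition qd x n := qv (nthN x (2 * hdN n)) (nthN x (2 * hdN (tlN n)).+1) n.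
Definition L_t n x := leN (sizeN x) (n + n + 1).
Definition Lx x := find1 L_t (sizeN x) x.
Definition phi_s j y x := consN (qd x (Lx x - j.+1)) y.
Definition phiR := rec1f (fun _ => 0) phi_s.
Definition PhiA x := phiR (Lx x) x.

Lemma PR_PhiA : PR1 PhiA.
Proof.
have H1 : PR3 validT by rewrite /validT; prs.
have H2 : PR3 validN by rewrite /validN; prs.
have H3 : PR3 qv by rewrite /qv; prs.
have H4 : PR2 qd by rewrite /qd; prs.
have H5 : PR2 L_t by rewrite /L_t; prs.
have H6 : PR1 Lx by rewrite /Lx; prs.
have H7 : PR3 phi_s by rewrite /phi_s; prs.
have H8 : PR2 phiR by rewrite /phiR; apply: PR_rec1f; prs'.
by rewrite /PhiA; prs.
Qed.

Lemma phiR_spec x j : j <= Lx x ->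
  phiR j x = CodeSeq.code [seq qd x k | k <- iota (Lx x - j) j].
Proof.
rewrite /phiR /rec1f; elim: j => [|j IH] js.
  reflexivity.
rewrite [prec _ _ _]/= IH; last exact: ltnW.
rewrite /phi_s consN_code.
have -> : iota (Lx x - j.+1) j.+1 = (Lx x - j.+1) :: iota (Lx x - j) j.
  have E : (Lx x - j.+1).+1 = Lx x - j by clear IH; lia.
  by rewrite -E.
reflexivity.
Qed.

Definition hPhi (s : seq nat) := CodeSeq.decode (PhiA (CodeSeq.code s)).

Lemma hPhiE s : hPhi s = [seq qd (CodeSeq.code s) k | k <- iota 0 (Lx (CodeSeq.code s))].
Proof. by rewrite /hPhi /PhiA phiR_spec // subnn CodeSeq.codeK. Qed.

Lemma hPhi_comp : computable_seq hPhi.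
Proof.
have [c Hc] := comp_of_PR1 PR_PhiA.
by exists c => x; rewrite /hPhi !CodeSeq.decodeK.
Qed.

Lemma mulnNZ a b : (a * b != 0) = (a != 0) && (b != 0).
Proof. by rewrite muln_eq0 negb_or. Qed.

Lemma hdN_le m : hdN m <= m.
Proof.
rewrite -{1 2}[m]CodeSeq.decodeK; case: (CodeSeq.decode m) => [|x t] //.
rewrite hdN_code -consN_code /=; exact: ltnW (consN_gt x _).1.
Qed.

Lemma tlN_le m : tlN m <= m.
Proof.
rewrite -{1 2}[m]CodeSeq.decodeK; case: (CodeSeq.decode m) => [|x t] //.
rewrite tlN_code -consN_code /=; exact: ltnW (consN_gt x _).2.
Qed.

Lemma validT_spec a b T :
  validT a b (CodeSeq.code T) != 0 <->
  sorted ltn T /\ 2 <= size T /\ hdN (nth 0 T 0) < hdN (nth 0 T 1) /\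
  tlN (nth 0 T 0) < tlN (nth 0 T 1) /\
  size (CodeSeq.decode a.-1) <= size T /\
  (forall k, k < size (CodeSeq.decode a.-1) ->
         nth 0 (CodeSeq.decode a.-1) k = hdN (nth 0 T k)) /\
  size (CodeSeq.decode b.-1) <= size T /\
  (forall k, k < size (CodeSeq.decode b.-1) ->
         nth 0 (CodeSeq.decode b.-1) k = tlN (nth 0 T k)).
Proof.
rewrite /validT !mulnNZ /srtN /pfxH /pfxT /ball1 /ball2.
rewrite -[a.-1]CodeSeq.decodeK -[b.-1]CodeSeq.decodeK.
set S1 := CodeSeq.decode a.-1; set S2 := CodeSeq.decode b.-1.
rewrite !sizeN_code !nthN_code !CodeSeq.codeK !ltNE !leNE.
split.
- case/andP=> /andP[] /andP[] /andP[] /andP[] /andP[] /andP[].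
  move=> /ballNP Hs H2 H3 H4 H5 /ballNP H6 H7 /ballNP H8.
  do !split => //.
  + apply/(sortedP 0) => i Hi; have := Hs i; rewrite /srt_t !nthN_code ltNE; apply.
    by rewrite -ltnS (ltn_predK Hi).
  + move=> k Hk; have := H6 k Hk; rewrite /pfxH_t !nthN_code eqNE => /eqP.
    done.
  + move=> k Hk; have := H8 k Hk; rewrite /pfxT_t !nthN_code eqNE => /eqP.
    done.
- case=> Hs [H2 [H3 [H4 [H5 [H6 [H7 H8]]]]]].
  rewrite H2 H3 H4 H5 H7 /= !andbT; apply/andP; split; [apply/andP; split|].
  + apply/ballNP => k Hk; rewrite /srt_t !nthN_code ltNE.
    by move/(sortedP 0): Hs; apply; rewrite -(ltn_predK H2) ltnS.
  + apply/ballNP => k Hk; rewrite /pfxH_t !nthN_code eqNE; apply/eqP; exact: H6.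
  + apply/ballNP => k Hk; rewrite /pfxT_t !nthN_code eqNE; apply/eqP; exact: H8.
Qed.

Definition qq (p : baire) n := qv (p (2 * hdN n)) (p (2 * hdN (tlN n)).+1) n.

Lemma qq_pos p n : 0 < qq p n ->
  [/\ 0 < p (2 * hdN n), 0 < p (2 * hdN (tlN n)).+1,
      validT (p (2 * hdN n)) (p (2 * hdN (tlN n)).+1) (tlN (tlN n)) != 0 &
      (qq p n).-1 = tlN (tlN n)].
Proof.
rewrite /qq /qv; case E: (validN _ _ _) => [|k] //= _.
have : validN (p (2 * hdN n)) (p (2 * hdN (tlN n)).+1) n != 0 by rewrite E.
by rewrite /validN !mulnNZ !ltNE => /andP[/andP[-> ->] ->].
Qed.

Lemma qq_val p n :
  validN (p (2 * hdN n)) (p (2 * hdN (tlN n)).+1) n != 0 -> qq p n = (tlN (tlN n)).+1.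
Proof. by rewrite /qq /qv; case: (validN _ _ _). Qed.

Lemma Lx_spec x : (forall n, n < Lx x -> n + n + 1 < sizeN x) /\
  (Lx x = sizeN x \/ sizeN x <= Lx x + Lx x + 1).
Proof.
rewrite /Lx /find1; case: (findlt_spec (sizeN x) (fun k => L_t k x)) => H1 H2 H3.
split.
  move=> n /H2; rewrite /L_t => E; rewrite ltnNge; apply/negP => le.
  by move: E; rewrite /leN le.
case: (ltngtP (findlt (sizeN x) (fun k => L_t k x)) (sizeN x)) => c.
- by right; move: (H3 c); rewrite /L_t leNE.
- by move: (leq_ltn_trans H1 c); rewrite ltnn.
- by left.
Qed.

Lemma sizeN_prefix p N : sizeN (CodeSeq.code (Defs.prefix p N)) = N.
Proof. by rewrite sizeN_code size_mkseq. Qed.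

Lemma phi_ok p : fcomputes hPhi p (qq p).
Proof.
split.
- move=> i; exists (i + i + 3); rewrite hPhiE size_map size_iota.
  have [_ H] := Lx_spec (CodeSeq.code (Defs.prefix p (i + i + 3))).
  rewrite sizeN_prefix in H; case: H => H; lia.
- move=> N i; rewrite hPhiE size_map size_iota => Hi.
  rewrite (nth_map 0); last by rewrite size_iota.
  rewrite nth_iota // add0n /qd /qq.
  have [H _] := Lx_spec (CodeSeq.code (Defs.prefix p N)).
  have := H i Hi; rewrite sizeN_prefix => HiN.
  have h1 := hdN_le i; have h2 := hdN_le (tlN i); have h3 := tlN_le i.
  rewrite !nthN_code /Defs.prefix nth_mkseq; last by lia.
  rewrite nth_mkseq; last by lia.
  done.
Qed.

Lemma incr_mono f : incr f -> forall a b, a < b -> f a < f b.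
Proof.
move=> Hf a b; elim: b => // b IH; rewrite ltnS leq_eqVlt => /orP[/eqP->|/IH h].
  exact: Hf.
exact: ltn_trans h (Hf b).
Qed.

Lemma incr_comp f g : incr f -> incr g -> incr (f \o g).
Proof. by move=> Hf Hg n; apply: incr_mono Hf _ _ (Hg n). Qed.

Lemma consN_mono x w y z : x <= y -> w < z -> consN x w < consN y z.
Proof.
rewrite /consN => xy wz; apply: (@leq_ltn_trans (2 ^ y * (w + w + 1))).
  by rewrite leq_mul2r leq_pexp2l // orbT.
rewrite ltn_pmul2l ?expn_gt0 //; lia.
Qed.

Lemma hom_in (P : baire -> Prop) f : homogeneous P f -> P f ->
  forall g, incr g -> P (f \o g).
Proof.
case=> _ [H|H] Pf //; exfalso.
by apply: (H id (fun n => ltnSn n)).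
Qed.

Lemma dom_q p : FindHS2_dom p -> FindHS_dom (qq p).
Proof.
case=> -[on1 [f1 [h1 o1]]] [on2 [f2 [h2 o2]]].
split.
  move=> n /qq_pos [_ _ V ->].
  move: V; rewrite -{1}[tlN (tlN n)]CodeSeq.decodeK => /validT_spec.
  by case.
pose F m := consN (f1 m) (f2 m).
have incrF : incr F by move=> m; apply: consN_mono; [exact: ltnW (h1.1 m) | exact: h2.1 m].
have key : forall g, incr g -> open_of (qq p) (F \o g).
  move=> g Hg; split; first exact: incr_comp.
  have [i1 [n1 [pos1 pre1]]] := hom_in h1 o1 Hg.
  have [i2 [n2 [pos2 pre2]]] := hom_in h2 o2 Hg.
  set S1 := CodeSeq.decode (pleft p n1).-1 in pre1.
  set S2 := CodeSeq.decode (pright p n2).-1 in pre2.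
  set L := maxn 2 (maxn (size S1) (size S2)).
  set T := mkseq (F \o g) L.
  have [e1 e2] := hd_tlN n1 (consN n2 (CodeSeq.code T)).
  have [e3 e4] := hd_tlN n2 (CodeSeq.code T).
  have L2 : 2 <= L by apply: leq_maxl.
  have LS1 : size S1 <= L by rewrite /L (leq_trans (leq_maxl _ _) (leq_maxr _ _)).
  have LS2 : size S2 <= L by rewrite /L (leq_trans (leq_maxr _ _) (leq_maxr _ _)).
  have nthT : forall k, k < L -> nth 0 T k = F (g k) by move=> k kL; rewrite nth_mkseq.
  have HV : validN (p (2 * hdN (consN n1 (consN n2 (CodeSeq.code T)))))
     (p (2 * hdN (tlN (consN n1 (consN n2 (CodeSeq.code T))))).+1)
     (consN n1 (consN n2 (CodeSeq.code T))) != 0.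
    rewrite /validN e2 e1 e3 e4 mulnNZ mulnNZ ltNE ltNE !mul2n -/(pleft p n1) -/(pright p n2).
    rewrite pos1 pos2 -/S1 -/S2.
    rewrite !andTb; apply/validT_spec; rewrite size_mkseq.
    have Fhd : forall m, hdN (F m) = f1 m by move=> m; rewrite (proj1 (hd_tlN _ _)).
    have Ftl : forall m, tlN (F m) = f2 m by move=> m; rewrite (proj2 (hd_tlN _ _)).
    do !split => //.
    + apply/(sortedP 0) => k Hk; rewrite size_mkseq in Hk.
      rewrite !nthT //; last exact: ltnW.
      exact: (incr_comp incrF Hg).
    + rewrite !nthT // ?Fhd; [exact: i1 0 | exact: leq_trans L2].
    + rewrite !nthT // ?Ftl; [exact: i2 0 | exact: leq_trans L2].
    + move=> k Hk; rewrite nthT ?Fhd; [exact: pre1 | exact: leq_trans LS1].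
    + move=> k Hk; rewrite nthT ?Ftl; [exact: pre2 | exact: leq_trans LS2].
  exists (consN n1 (consN n2 (CodeSeq.code T))); rewrite qq_val // e2 e4; split => //.
  rewrite /= CodeSeq.codeK => k; rewrite size_mkseq => kL.
  exact: nthT.
exists F; split; first by split; [exact: incrF | left; exact: key].
exact: (key id (fun n => ltnSn n)).
Qed.


Definition rr (R : baire) : baire :=
  fun m => if odd m then tlN (R m./2) else hdN (R m./2).

Lemma pairs_cons x s : pairs (x :: s) = hdN x :: tlN x :: pairs s.
Proof. reflexivity. Qed.

Lemma size_pairs s : size (pairs s) = 2 * size s.
Proof. elim: s => [|x s IH] //; rewrite pairs_cons /= IH; lia. Qed.

Lemma nth_pairs s k : k < 2 * size s ->
  nth 0 (pairs s) k = if odd k then tlN (nth 0 s k./2) else hdN (nth 0 s k./2).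
Proof.
elim: s k => [|x s IH] k //; rewrite pairs_cons.
case: k => [|[|k]] // H.
rewrite /= IH; last by move: H => /=; lia.
by rewrite negbK.
Qed.

Lemma psi_ok R : fcomputes hPsi R (rr R).
Proof.
split.
- by move=> i; exists i.+1; rewrite hPsiE size_pairs size_mkseq; lia.
- move=> n i; rewrite hPsiE size_pairs size_mkseq => Hi.
  rewrite nth_pairs ?size_mkseq // nth_mkseq //; last by move: Hi; case: (odd i) (odd_double_half i) => <-; lia.
Qed.

Lemma coord_sol pp (c : nat -> nat) R :
  (forall g, incr g -> c (R (g 0)) < c (R (g 1)) /\
     exists n, 0 < pp n /\ is_prefix_of (CodeSeq.decode (pp n).-1) (c \o (R \o g))) ->
  FindHS_sol pp (c \o R).
Proof.
move=> K.
have incrC : incr (c \o R).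
  move=> m; have Ha : incr (fun k => m + k) by move=> k; rewrite addnS.
  by have [H _] := K _ Ha; rewrite addn0 addn1 in H.
split; first by split => //; left => g Hg; split; [exact: incr_comp | exact: (K g Hg).2].
by split => //; exact: (K id (fun n => ltnSn n)).2.
Qed.

Lemma sol_ok p R : FindHS_sol (qq p) R -> FindHS2_sol p (rr R).
Proof.
case=> h o; have key := hom_in h o.
have E : forall g, incr g -> exists n,
   [/\ hdN (R (g 0)) < hdN (R (g 1)), tlN (R (g 0)) < tlN (R (g 1)),
       0 < pleft p (hdN n) /\
         is_prefix_of (CodeSeq.decode (pleft p (hdN n)).-1) (hdN \o (R \o g)) &
       0 < pright p (hdN (tlN n)) /\
         is_prefix_of (CodeSeq.decode (pright p (hdN (tlN n))).-1) (tlN \o (R \o g))].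
  move=> g Hg; have [_ [n [pos pre]]] := key g Hg.
  have [a1 a2 V e] := qq_pos pos.
  move: V; rewrite -{1}[tlN (tlN n)]CodeSeq.decodeK => /validT_spec.
  rewrite e in pre; set T := CodeSeq.decode (tlN (tlN n)) in pre *.
  case=> Hs [H2 [H3 [H4 [H5 [H6 [H7 H8]]]]]].
  have p0 : nth 0 T 0 = R (g 0) by apply: pre; apply: leq_trans H2.
  have p1 : nth 0 T 1 = R (g 1) by apply: pre.
  exists n; split.
  - by rewrite -p0 -p1.
  - by rewrite -p0 -p1.
  - split; first by rewrite /pleft -mul2n.
    rewrite /pleft -mul2n => k Hk /=; rewrite H6 // pre //; exact: leq_trans Hk H5.
  - split; first by rewrite /pright -mul2n.
    rewrite /pright -mul2n => k Hk /=; rewrite H8 // pre //; exact: leq_trans Hk H7.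
have El : pleft (rr R) = hdN \o R.
  by apply: functional_extensionality => n; rewrite /pleft /rr odd_double doubleK.
have Er : pright (rr R) = tlN \o R.
  apply: functional_extensionality => n; rewrite /pright /rr /= odd_double /=.
  by rewrite uphalf_double.
split; rewrite ?El ?Er; apply: coord_sol => g Hg; have [n [h1 h2 [q1 q2] [q3 q4]]] := E g Hg.
  by split => //; exists (hdN n).
by split => //; exists (hdN (tlN n)).
Qed.

Theorem mainTheorem10 :
  sW_le FindHS2_dom FindHS2_sol FindHS_dom FindHS_sol.
Proof.
exists hPhi, hPsi; split; first exact: hPhi_comp.
split; first exact: hPsi_comp.
move=> G HG p Hp; exists (qq p); split; first exact: phi_ok.
exists (rr (G (qq p))); split; first exact: psi_ok.
apply: sol_ok; apply: HG; exact: dom_q.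
Qed.
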